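(* Let $M\subsetneq F$ be a graded submodule, $\prec$ a monomial order on $F$, and $G$ a homogeneous Gröbner basis of $M$ with respect to $\prec$. Then $N_M$ admits an $l$-standard cone decomposition $Q$ such that \[ G'=\{g\in G:\deg(g)\le\max\{1+\deg(Q),\,l\}\} \] is also a Gröbner basis of $M$ with respect to $\prec$. In particular, the reduced Gröbner basis of $M$ with respect to $\prec$ has degree at most $\max\{1+\deg(Q),l\}$.
   Context: Standing notation. $S=\mathbb{K}[x_1,\dots,x_n]$ is standard graded, and $F=Se_1\oplus\cdots\oplus Se_m$ is a graded free module with $\deg(e_j)\ge0$ integers; $l=\max_j\deg(e_j)$. Monomials of $F$ are $x^\alpha e_j$ of degree $|\alpha|+\deg(e_j)$. For a monomial order $\prec$ and a submodule $M$, $N_M$ is the $\mathbb{K}$-span of the monomials of $F$ not in $\mathrm{in}_\prec(M)$. Cones. For a homogeneous $h\in F$ and $u\subseteq\{x_1,\dots,x_n\}$, the cone $C(h,u)=h\,\mathbb{K}[u]$ has degree $\deg(h)$ and dimension $|u|$. A cone decomposition of a $\mathbb{K}$-subspace $T\subseteq F$ is a finite set $P$ of cones with $T=\bigoplus_{C\in P}C$ as $\mathbb{K}$-vector spaces; $\deg(P)=\max_{C\in P}\deg(C)$, and $P^+=\{C\in P:\dim C>0\}$. $P$ is $q$-standard if (1) no $C\in P^+$ has $\deg(C)<q$, and (2) for every $C\in P^+$ and every integer $d$ with $q\le d\le\deg(C)$ there is $C'\in P$ with $\deg(C')=d$ and $\dim(C')\ge\dim(C)$. *)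

(* Defs.v *)
(* Multivariate polynomials are not available, so the free
   module F = S e_1 + ... + S e_m over S = K[x_1..x_n] is encoded directly:
   an element of F is a finitely supported function from monomials of F to K. *)
From HB Require Import structures.
From mathcomp Require Import all_boot all_order all_algebra.
From Stdlib Require Lists.List.
Set Implicit Arguments. Unset Strict Implicit. Unset Printing Implicit Defensive.
Import GRing.Theory.
Local Open Scope ring_scope.

Notation expv n := {ffun 'I_n -> nat}.
(* monomials x^alpha e_j of F *)
Definition mon (n m : nat) := (expv n * 'I_m)%type.
(* (possibly non-finitely-supported) coefficient functions; elements of F are
   those satisfying [finsupp] *)
Definition vec (K : fieldType) (n m : nat) := mon n m -> K.

Record cone (K : fieldType) (n m : nat) := Cone {
  cgen : vec K n m;
  cvars : {set 'I_n};
  cdeg : nat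
}.

Section Defs.
Variables (K : fieldType) (n m : nat).
Local Notation mon := (mon n m).
Local Notation vec := (vec K n m).
Local Notation cone := (cone K n m).

Definition vzero : vec := fun _ => 0.

Definition finsupp (f : vec) : Prop :=
  exists s : seq mon, forall mu, f mu != 0 -> mu \in s.

Definition mdeg (deg : 'I_m -> nat) (mu : mon) : nat :=
  (\sum_(i < n) mu.1 i + deg mu.2)%N.

Definition homog (deg : 'I_m -> nat) (f : vec) (d : nat) : Prop :=
  forall mu, f mu != 0 -> mdeg deg mu = d.

Definition deg_le (deg : 'I_m -> nat) (f : vec) (b : nat) : Prop :=
  forall mu, f mu != 0 -> (mdeg deg mu <= b)%N.

Definition mmul (g : expv n) (mu : mon) : mon :=
  ([ffun i => (g i + mu.1 i)%N], mu.2).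

Definition mdvd (nu mu : mon) : bool :=
  (nu.2 == mu.2) && [forall i, (nu.1 i <= mu.1 i)%N].

(* x^gamma * f *)
Definition shift (g : expv n) (f : vec) : vec := fun mu =>
  if [forall i, (g i <= mu.1 i)%N]
  then f ([ffun i => (mu.1 i - g i)%N], mu.2) else 0.

Definition is_submodule (M : vec -> Prop) : Prop :=
  (forall f, M f -> finsupp f) /\ M vzero /\
  (forall f g, M f -> M g -> M (fun mu => f mu + g mu)) /\
  (forall a f, M f -> M (fun mu => a * f mu)) /\
  (forall g f, M f -> M (shift g f)).

Definition homog_comp (deg : 'I_m -> nat) (d : nat) (f : vec) : vec :=
  fun mu => if mdeg deg mu == d then f mu else 0.

Definition is_graded (deg : 'I_m -> nat) (M : vec -> Prop) : Prop :=
  forall f, M f -> forall d, M (homog_comp deg d f).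

Definition is_proper_submod (M : vec -> Prop) : Prop :=
  exists f, finsupp f /\ ~ M f.

Definition is_monomial_order (lt : rel mon) : Prop :=
  irreflexive lt /\ transitive lt /\
  (forall a b, a != b -> lt a b || lt b a) /\
  (forall g a b, lt a b -> lt (mmul g a) (mmul g b)) /\
  well_founded (fun a b => lt a b).

Definition is_lm (lt : rel mon) (f : vec) (mu : mon) : Prop :=
  f mu != 0 /\ forall nu, f nu != 0 -> nu != mu -> lt nu mu.

Definition in_init (lt : rel mon) (M : vec -> Prop) (mu : mon) : Prop :=
  exists f nu, M f /\ is_lm lt f nu /\ mdvd nu mu.

Definition NM (lt : rel mon) (M : vec -> Prop) (f : vec) : Prop :=
  finsupp f /\ forall mu, f mu != 0 -> ~ in_init lt M mu.

Definition is_GB (lt : rel mon) (M : vec -> Prop) (Gs : vec -> Prop) : Prop :=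
  (forall g, Gs g -> M g) /\
  forall f mu, M f -> is_lm lt f mu ->
    exists g nu, Gs g /\ is_lm lt g nu /\ mdvd nu mu.

Definition is_reduced_GB (lt : rel mon) (M : vec -> Prop) (R : seq vec) : Prop :=
  is_GB lt M (fun g => Stdlib.Lists.List.In g R) /\
  (forall i j, (i < size R)%N -> (j < size R)%N -> i <> j ->
     forall mu nu, is_lm lt (nth vzero R j) nu -> nth vzero R i mu != 0 ->
       ~~ mdvd nu mu) /\
  (forall g, Stdlib.Lists.List.In g R -> exists nu, is_lm lt g nu /\ g nu = 1).

Definition valid_cone (deg : 'I_m -> nat) (C : cone) : Prop :=
  finsupp (cgen C) /\ (exists mu, cgen C mu != 0) /\
  homog deg (cgen C) (cdeg C).

Definition in_cone (C : cone) (c : vec) : Prop :=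
  exists s : seq (expv n * K),
    all (fun p : expv n * K => [forall i, (p.1 i != 0%N) ==> (i \in cvars C)]) s /\
    forall mu, c mu = \sum_(p <- s) p.2 * shift p.1 (cgen C) mu.

Definition cone_decomp (deg : 'I_m -> nat) (k : nat) (P : 'I_k -> cone)
    (T : vec -> Prop) : Prop :=
  (forall i, valid_cone deg (P i)) /\
  (forall t, T t <-> exists cs : 'I_k -> vec,
      (forall i, in_cone (P i) (cs i)) /\ forall mu, t mu = \sum_(i < k) cs i mu) /\
  (forall cs : 'I_k -> vec, (forall i, in_cone (P i) (cs i)) ->
      (forall mu, \sum_(i < k) cs i mu = 0) -> forall i mu, cs i mu = 0).

Definition Pdeg (k : nat) (P : 'I_k -> cone) : nat := \max_(i < k) cdeg (P i).

Definition q_standard (q : nat) (k : nat) (P : 'I_k -> cone) : Prop :=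
  (forall i, (0 < #|cvars (P i)|)%N -> (q <= cdeg (P i))%N) /\
  (forall i, (0 < #|cvars (P i)|)%N -> forall d, (q <= d <= cdeg (P i))%N ->
     exists j, cdeg (P j) = d /\ (#|cvars (P i)| <= #|cvars (P j)|)%N).

End Defs.

(* Main.v *)
Require Import Defs.
From HB Require Import structures.
From mathcomp Require Import all_boot all_order all_algebra.
From Stdlib Require Lists.List.
From mathcomp Require Import zify.
From Stdlib Require Import Classical.


Set Implicit Arguments. Unset Strict Implicit. Unset Printing Implicit Defensive.


Section Mon.
Variables (n m : nat).
Implicit Types (a b mu nu : mon n m) (g : expv n) (c : mon n m * {set 'I_n}).

Definition gam a b : expv n := [ffun k => b.1 k - a.1 k].
Definition incone (c : mon n m * {set 'I_n}) mu : bool :=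
  mdvd c.1 mu && [forall k, (k \notin c.2) ==> (mu.1 k == c.1.1 k)].
Definition unitv (i : 'I_n) : expv n := [ffun k => nat_of_bool (k == i)].
Definition mdec (k : 'I_n) mu : mon n m :=
  ([ffun i => if i == k then (mu.1 i).-1 else mu.1 i], mu.2).

Lemma mdvdP a b : reflect (a.2 = b.2 /\ forall i, a.1 i <= b.1 i) (mdvd a b).
Proof.
rewrite /mdvd; apply: (iffP andP) => [[/eqP -> /forallP H]|[-> H]]; split=> //.
by apply/forallP.
Qed.

Lemma mdvd_refl a : mdvd a a.
Proof. by apply/mdvdP. Qed.

Lemma mdvd_trans a b (d : mon n m) : mdvd a b -> mdvd b d -> mdvd a d.
Proof.
move=> /mdvdP[e1 H1] /mdvdP[e2 H2]; apply/mdvdP; split; first by rewrite e1.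
by move=> i; apply: leq_trans (H1 i) (H2 i).
Qed.

Lemma mon_eq a b : a.1 =1 b.1 -> a.2 = b.2 -> a = b.
Proof. by case: a b => [a1 a2] [b1 b2] /= /ffunP -> ->. Qed.

Lemma mdvd_mmul a b : mdvd a b -> b = mmul (gam a b) a.
Proof.
move=> /mdvdP[e H]; apply: mon_eq => [i|] /=; last by [].
by rewrite !ffunE subnK.
Qed.

Lemma mmul_mdvd g a : mdvd a (mmul g a).
Proof. by apply/mdvdP; split=> // i; rewrite ffunE leq_addl. Qed.

Lemma mdeg_mmul (deg : 'I_m -> nat) g a :
  mdeg deg (mmul g a) = (\sum_(i < n) g i + mdeg deg a)%N.
Proof.
rewrite /mdeg /= addnA; congr (_ + _)%N.
by rewrite -big_split; apply: eq_bigr => i _; rewrite ffunE.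
Qed.

Lemma mdvd_mdeg (deg : 'I_m -> nat) a b : mdvd a b -> mdeg deg a <= mdeg deg b.
Proof.
move=> H; rewrite (mdvd_mmul H) mdeg_mmul; apply: leq_addl.
Qed.

Lemma mdvd_mdeg_eq (deg : 'I_m -> nat) a b :
  mdvd a b -> mdeg deg a = mdeg deg b -> a = b.
Proof.
move=> H; rewrite {1}(mdvd_mmul H) mdeg_mmul => E.
have S0 : (\sum_(i < n) gam a b i = 0)%N by lia.
rewrite (mdvd_mmul H); apply: mon_eq => //= i; rewrite ffunE.
have : (gam a b i <= \sum_(i < n) gam a b i)%N.
  by rewrite (bigD1 i) //= leq_addr.
by rewrite S0 leqn0 => /eqP ->.
Qed.

Lemma mmul0 a : mmul [ffun _ => 0%N] a = a.
Proof. by apply: mon_eq => //= i; rewrite !ffunE. Qed.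

Lemma mmulA g1 g2 a : mmul g1 (mmul g2 a) = mmul [ffun i => g1 i + g2 i]%N a.
Proof. by apply: mon_eq => //= i; rewrite !ffunE addnA. Qed.

Lemma inconeP c mu : incone c mu ->
  mu = mmul (gam c.1 mu) c.1 /\ forall k, gam c.1 mu k != 0%N -> k \in c.2.
Proof.
move=> /andP[H /forallP H2]; split; first exact: mdvd_mmul.
move=> k; rewrite ffunE; apply: contraR => Hk.
by move: (H2 k); rewrite Hk /= => /eqP ->; rewrite subnn.
Qed.

Lemma incone_mmul c g : (forall k, g k != 0%N -> k \in c.2) -> incone c (mmul g c.1).
Proof.
move=> H; apply/andP; split; first exact: mmul_mdvd.
apply/forallP => k; apply/implyP => Hk; rewrite /= ffunE.
have : g k = 0%N by apply/eqP; apply: contraR Hk; apply: H.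
by move=> ->.
Qed.

Lemma incone_gen c : incone c c.1.
Proof. have := @incone_mmul c [ffun _ => 0%N]; rewrite mmul0; apply=> k; by rewrite ffunE. Qed.

Lemma incone_mdvd c mu : incone c mu -> mdvd c.1 mu.
Proof. by case/andP. Qed.

Lemma mdec_mdvd k mu : mdvd (mdec k mu) mu.
Proof.
apply/mdvdP; split=> // i; rewrite /= ffunE; case: (i == k) => //; exact: leq_pred.
Qed.

Lemma mdeg_mdec (deg : 'I_m -> nat) k mu : (0 < mu.1 k)%N ->
  (mdeg deg (mdec k mu)).+1 = mdeg deg mu.
Proof.
move=> Hk; rewrite /mdeg /= -addSn; congr (_ + _)%N.
rewrite (bigD1 k) //= [in RHS](bigD1 k) //= ffunE eqxx -addSn prednK //.
congr (_ + _)%N; apply: eq_bigr => i /negbTE Hi; by rewrite ffunE Hi.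
Qed.

End Mon.


Lemma max_set (T : finType) (P : {set T} -> Prop) : P set0 ->
  exists w, P w /\ forall w', P w' -> (#|w'| <= #|w|)%N.
Proof.
move=> P0; apply: NNPP => H.
have Hk : forall k, exists w, P w /\ (k <= #|w|)%N.
  elim=> [|k IH]; first by exists set0.
  move: IH => [w [Pw Hk]].
  have : ~ (forall w', P w' -> (#|w'| <= #|w|)%N) by move=> H'; apply: H; exists w.
  move=> /not_all_ex_not [w' Hw']; move: (imply_to_and _ _ Hw') => [Pw' /negP].
  rewrite -ltnNge => Hlt.
  by exists w'; split => //; lia.
have [w [_]] := Hk #|T|.+1; by rewrite ltnNge max_card.
Qed.

Lemma lex_ind (A B : Type) (cu : B -> nat) (f : A -> nat) (P : A -> B -> Prop) :
  (forall h u, (forall h' u', (cu u' < cu u)%N \/ (cu u' = cu u /\ (f h' < f h)%N) -> P h' u') -> P h u) ->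
  forall h u, P h u.
Proof.
move=> step.
suff: forall s t h u, (cu u < s)%N -> (f h < t)%N -> P h u.
  by move=> H h u; apply: (H (cu u).+1 (f h).+1).
elim=> [|s IHs] //.
elim=> [|t IHt] // h u Hu Ht; apply: step => h' u' [Hlt|[Heq Hlt]].
  by apply: (IHs (f h').+1) => //; lia.
by apply: IHt; lia.
Qed.

Section Split.
Variables (K : fieldType) (n m : nat) (deg : 'I_m -> nat) (lt : rel (mon n m))
  (M : vec K n m -> Prop) (G : seq (vec K n m)) (l B : nat).
Hypothesis HGB : is_GB lt M (fun g => List.In g G).
Hypothesis HB : forall g, List.In g G -> forall nu, g nu != 0%R -> forall k, (nu.1 k < B)%N.

Local Notation mon := (mon n m).
Local Notation md := (mdeg deg).
Local Notation cone := (mon * {set 'I_n})%type.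

Implicit Types (u w v : {set 'I_n}) (h mu : mon) (i : 'I_n).

Definition std (mu : mon) := ~ in_init lt M mu.

Lemma nstd_mdvd a b : ~ std a -> mdvd a b -> ~ std b.
Proof.
move=> /NNPP [f [nu [Mf [Hlm Hd]]]] Hab; apply.
by exists f, nu; split=> //; split=> //; apply: mdvd_trans Hd Hab.
Qed.

Lemma std_div a b : std b -> mdvd a b -> std a.
Proof. by move=> Hb Hab Ha; exact: (nstd_mdvd (fun H => H Ha) Hab Hb). Qed.

Lemma nstd_G mu : ~ std mu -> exists g nu, List.In g G /\ is_lm lt g nu /\ mdvd nu mu.
Proof.
move=> /NNPP [f [nu [Mf [Hlm Hd]]]].
have [g [nu' [Gg [Hlm' Hd']]]] := HGB.2 f nu Mf Hlm.
by exists g, nu'; split=> //; split=> //; apply: mdvd_trans Hd' Hd.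
Qed.

Lemma G_nstd g nu mu : List.In g G -> is_lm lt g nu -> mdvd nu mu -> ~ std mu.
Proof. by move=> Gg Hlm Hd; apply; exists g, nu; split=> //; apply: HGB.1. Qed.

Definition allstd (h : mon) (w : {set 'I_n}) := forall mu, incone (h, w) mu -> std mu.

Definition Qmax (Q : seq cone) := (\max_(c <- Q) md c.1)%N.

Definition Qstd (q : nat) (Q : seq cone) :=
  forall c, c \in Q -> c.2 != set0 -> (q <= md c.1)%N /\
    forall d, (q <= d <= md c.1)%N -> (exists2 c', c' \in Q & md c'.1 = d /\ (#|c.2| <= #|c'.2|)%N).

Definition Inv (h : mon) (u : {set 'I_n}) (Q : seq cone) :=
  (forall mu, incone (h, u) mu -> std mu -> has (fun c => incone c mu) Q) /\
  (forall mu, (count (fun c => incone c mu) Q <= 1)%N) /\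
  (forall c, c \in Q -> c.2 \subset u /\ forall mu, incone c mu -> incone (h, u) mu /\ std mu) /\
  Qstd (maxn l (md h)) Q /\
  ((l <= md h)%N -> forall w : {set 'I_n}, w \subset u -> allstd h w ->
         exists2 c, c \in Q & c.1 = h /\ (#|w| <= #|c.2|)%N) /\
  (forall mu, incone (h, u) mu -> ~ std mu ->
         (forall k, (h.1 k < mu.1 k)%N -> std (mdec k mu)) ->
         (md mu <= maxn (Qmax Q).+1 (maxn l (md h)))%N).

Lemma inconeE (a : mon) w mu : incone (a, w) mu <->
  a.2 = mu.2 /\ (forall k, a.1 k <= mu.1 k)%N /\ (forall k, k \notin w -> mu.1 k = a.1 k).
Proof.
rewrite /incone /=; split.
  move=> /andP[/mdvdP[e H] /forallP H2]; split=> //; split=> // k Hk.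
  by move: (H2 k); rewrite Hk => /eqP.
move=> [e [H H2]]; apply/andP; split; first by apply/mdvdP.
by apply/forallP => k; apply/implyP => Hk; rewrite H2.
Qed.


Lemma incone_sub (h : mon) w v mu : w \subset v -> incone (h, w) mu -> incone (h, v) mu.
Proof.
move=> /subsetP Hs /inconeE [e [H1 H2]]; apply/inconeE; split=> //; split=> // k Hk.
by apply: H2; apply: contra Hk; apply: Hs.
Qed.

Lemma unitvE i k : unitv i k = nat_of_bool (k == i).
Proof. by rewrite ffunE. Qed.

Lemma R1 (h : mon) u i mu : incone (h, u) mu -> mu.1 i = h.1 i -> incone (h, u :\ i) mu.
Proof.
move=> /inconeE [e [H1 H2]] Hi; apply/inconeE; split=> //; split=> // k.
rewrite in_setD1 negb_and negbK => /orP[/eqP -> //|]; exact: H2.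
Qed.

Lemma R2 (h : mon) u i mu : i \in u -> incone (h, u) mu -> (h.1 i < mu.1 i)%N ->
  incone (mmul (unitv i) h, u) mu.
Proof.
move=> iu /inconeE [e [H1 H2]] Hi; apply/inconeE; split=> //; split=> k; rewrite /= ffunE unitvE.
  by case: (k =P i) => [->|_] //=; rewrite add0n.
move=> Hk; have ki : k != i by apply: contraNneq Hk => ->.
by rewrite (negbTE ki) add0n; apply: H2.
Qed.

Lemma R3 (h : mon) u i mu : incone (h, u :\ i) mu -> incone (h, u) mu /\ mu.1 i = h.1 i.
Proof.
move=> H; split; first by apply: incone_sub H; apply: subsetDl.
by move: H => /inconeE [_ [_ H2]]; apply: H2; rewrite in_setD1 eqxx.
Qed.

Lemma R4 (h : mon) u i mu : i \in u -> incone (mmul (unitv i) h, u) mu ->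
  incone (h, u) mu /\ (h.1 i < mu.1 i)%N.
Proof.
move=> iu /inconeE [e [H1 H2]]; split.
  apply/inconeE; split=> //; split=> k.
    by move: (H1 k); rewrite /= ffunE; lia.
  move=> Hk; have ki : k != i by apply: contraNneq Hk => ->.
  by rewrite H2 //= ffunE unitvE (negbTE ki) add0n.
by move: (H1 i); rewrite /= ffunE unitvE eqxx.
Qed.

Lemma allstd0 h : std h -> allstd h set0.
Proof.
move=> Hh mu /inconeE [e [H1 H2]].
have -> : mu = h by apply: mon_eq => // k; apply: H2; rewrite in_set0.
done.
Qed.

Lemma md_unitv (h : mon) i : md (mmul (unitv i) h) = (md h).+1.
Proof.
rewrite mdeg_mmul (bigD1 i) //= unitvE eqxx big1 ?addn0 //.
by move=> k /negbTE Hk; rewrite unitvE Hk.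
Qed.

Lemma Qmax_cat Q1 Q2 : Qmax (Q1 ++ Q2) = maxn (Qmax Q1) (Qmax Q2).
Proof. by rewrite /Qmax big_cat. Qed.

Lemma Qmax_ge c Q : c \in Q -> (md c.1 <= Qmax Q)%N.
Proof. by move=> cQ; apply: (@leq_bigmax_seq _ Q xpredT (fun c : cone => md c.1) c). Qed.

Lemma Inv_nstd h u : ~ std h -> Inv h u [::].
Proof.
move=> Hh; split.
  by move=> mu /incone_mdvd Hd Hmu; exfalso; apply: (nstd_mdvd Hh Hd).
split; first by [].
split; first by [].
split; first by [].
split.
  by move=> _ w _ Hw; exfalso; apply: Hh; apply: Hw; apply: incone_gen.
move=> mu Hmu _ Hk.
have Hd : mdvd mu h.
  move: Hmu => /inconeE [e [H1 H2]]; apply/mdvdP; split=> // k.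
  rewrite leqNgt; apply/negP => Hlt.
  apply: (nstd_mdvd Hh _ (Hk k Hlt)).
  apply/mdvdP; split=> // j; rewrite /= ffunE; case: eqP => [->|_]; last exact: H1.
  by move: Hlt; lia.
apply: leq_trans (mdvd_mdeg deg Hd) _; lia.
Qed.

Lemma Inv_single h u : std h -> allstd h u -> (u != set0 -> (l <= md h)%N) -> Inv h u [:: (h, u)].
Proof.
move=> Hh Hall Hl; split.
  by move=> mu Hmu _; rewrite /= Hmu.
split; first by move=> mu /=; case: (incone _ _).
split.
  by move=> c; rewrite inE => /eqP -> /=; split=> // mu Hmu; split=> //; apply: Hall.
split.
  move=> c; rewrite inE => /eqP -> /= Hu.
  have := Hl Hu => Hlh; split; first by rewrite geq_max leqnn Hlh.
  move=> d Hd; exists (h, u); first by rewrite inE.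
  split=> //=; move: Hd; rewrite (maxn_idPr Hlh) => /andP[H1 H2]; apply/eqP; by rewrite eqn_leq H1 H2.
split.
  by move=> Hlh w Hw _; exists (h, u); rewrite ?inE //; split=> //; apply: subset_leq_card.
by move=> mu Hmu Hn; exfalso; apply: Hn; apply: Hall.
Qed.

Lemma allstd_cone h (c : cone) : (forall mu, incone c mu -> std mu) -> mdvd h c.1 -> allstd h c.2.
Proof.
move=> Hc Hd mu Hmu; have [E Hs] := inconeP Hmu.
move: Hs; set g := gam _ _ => Hs; rewrite E.
apply: (std_div (b := mmul g c.1)).
  by apply: Hc; apply: incone_mmul.
move: Hd => /mdvdP [e H]; apply/mdvdP; split=> //= k; rewrite !ffunE leq_add2l; exact: H.
Qed.

Section SplitCommon.
Variables (h : mon) (u : {set 'I_n}) (i : 'I_n) (Q0 Q1 : seq cone).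
Hypotheses (iu : i \in u) (Hh : std h) (I0 : Inv h (u :\ i) Q0)
  (I1 : Inv (mmul (unitv i) h) u Q1).

Lemma split_cover : forall mu, incone (h, u) mu -> std mu ->
  has (fun c => incone c mu) (Q0 ++ Q1).
Proof.
move=> mu Hmu Hs; rewrite has_cat; apply/orP.
case: (eqVneq (mu.1 i) (h.1 i)) => E.
  by left; apply: I0.1 => //; apply: R1.
right; apply: I1.1 => //; apply: R2 => //.
move: Hmu => /inconeE [_ [H1 _]]; move: (H1 i) E; lia.
Qed.

Lemma split_count : forall mu, (count (fun c => incone c mu) (Q0 ++ Q1) <= 1)%N.
Proof.
move=> mu; rewrite count_cat.
have C0 := I0.2.1 mu; have C1 := I1.2.1 mu.
have : ~~ (has (fun c => incone c mu) Q0 && has (fun c => incone c mu) Q1).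
  apply/negP => /andP [/hasP [c cQ Hc] /hasP [c' cQ' Hc']].
  have [_ /(_ mu Hc) [/R3 [_ E] _]] := I0.2.2.1 c cQ.
  have [_ /(_ mu Hc') [/R4 [] // _ Hlt _]] := I1.2.2.1 c' cQ'.
  by move: Hlt; rewrite E ltnn.
rewrite !has_count; lia.
Qed.

Lemma split_sub : forall c, c \in Q0 ++ Q1 ->
  c.2 \subset u /\ forall mu, incone c mu -> incone (h, u) mu /\ std mu.
Proof.
move=> c; rewrite mem_cat => /orP [cQ|cQ].
  have [Hs Hc] := I0.2.2.1 c cQ; split.
    by apply: subset_trans Hs _; apply: subsetDl.
  by move=> mu /Hc [/R3 [H _] Hst].
have [Hs Hc] := I1.2.2.1 c cQ; split=> // mu /Hc [/R4 [] // H _ Hst]; done.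
Qed.

Lemma split_deg : forall mu, incone (h, u) mu -> ~ std mu ->
  (forall k, (h.1 k < mu.1 k)%N -> std (mdec k mu)) ->
  (md mu <= maxn (Qmax (Q0 ++ Q1)).+1 (maxn l (md h)))%N.
Proof.
move=> mu Hmu Hn Hk; rewrite Qmax_cat.
case: (eqVneq (mu.1 i) (h.1 i)) => E.
  have := I0.2.2.2.2.2 mu (R1 Hmu E) Hn Hk.
  move=> H; apply: leq_trans H _; lia.
have Hlt : (h.1 i < mu.1 i)%N.
  by move: Hmu => /inconeE [_ [H1 _]]; move: (H1 i) E; lia.
have := I1.2.2.2.2.2 mu (R2 iu Hmu Hlt) Hn.
have Hk' : forall k, ((mmul (unitv i) h).1 k < mu.1 k)%N -> std (mdec k mu).
  by move=> k Hk2; apply: Hk; move: Hk2; rewrite /= ffunE; lia.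
move=> /(_ Hk') H; apply: leq_trans H _; rewrite md_unitv.
have Hhq : ((md h).+1 <= maxn (maxn (Qmax Q0) (Qmax Q1)).+1 (maxn l (md h)))%N.
  case: (leqP l (md h)) => Hl.
    have [c cQ [c1 _]] := I0.2.2.2.2.1 Hl set0 (sub0set _) (allstd0 Hh).
    have := Qmax_ge cQ; rewrite c1 => Hc; lia.
  lia.
lia.
Qed.

End SplitCommon.

Lemma Qstd_cat q Q0 Q1 : Qstd q Q0 -> Qstd q Q1 -> Qstd q (Q0 ++ Q1).
Proof.
move=> H0 H1 c; rewrite mem_cat => /orP [cQ|cQ] Hc.
  have [Hq Hd] := H0 c cQ Hc; split=> // d /Hd [c' c'Q Hc'].
  by exists c' => //; rewrite mem_cat c'Q.
have [Hq Hd] := H1 c cQ Hc; split=> // d /Hd [c' c'Q Hc'].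
by exists c' => //; rewrite mem_cat c'Q orbT.
Qed.

Lemma Inv_splitE h u i Q0 Q1 : (md h < l)%N -> i \in u -> std h -> Inv h (u :\ i) Q0 ->
  Inv (mmul (unitv i) h) u Q1 -> Inv h u (Q0 ++ Q1).
Proof.
move=> Hl iu Hh I0 I1.
split; first exact: (split_cover iu I0 I1).
split; first exact: (split_count iu I0 I1).
split; first exact: (split_sub iu I0 I1).
split.
  have E0 : maxn l (md h) = l by apply/maxn_idPl; apply: ltnW.
  have E1 : maxn l (md (mmul (unitv i) h)) = l by apply/maxn_idPl; rewrite md_unitv.
  rewrite E0; apply: Qstd_cat; first by rewrite -E0; apply: I0.2.2.2.1.
  by rewrite -E1; apply: I1.2.2.2.1.
split; first by move=> H; exfalso; move: H; rewrite leqNgt Hl.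
exact: (split_deg iu Hh I0 I1).
Qed.

Lemma Inv_splitC h u i w Q0 Q1 : (l <= md h)%N -> i \in u -> std h ->
  w \subset u -> allstd h w -> i \notin w ->
  (forall v, v \subset u -> allstd h v -> (#|v| <= #|w|)%N) ->
  Inv h (u :\ i) Q0 -> Inv (mmul (unitv i) h) u Q1 -> Inv h u (Q0 ++ Q1).
Proof.
move=> Hl iu Hh wu Hw iw Hmax I0 I1.
have wu' : w \subset u :\ i.
  apply/subsetP => k kw; rewrite in_setD1 (subsetP wu) // andbT.
  by apply: contraNneq iw => <-.
split; first exact: (split_cover iu I0 I1).
split; first exact: (split_count iu I0 I1).
split; first exact: (split_sub iu I0 I1).
split.
  have E0 : maxn l (md h) = md h by apply/maxn_idPr.
  have E1 : maxn l (md (mmul (unitv i) h)) = (md h).+1.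
    by rewrite md_unitv; apply/maxn_idPr; apply: leqW.
  rewrite E0 => c; rewrite mem_cat => /orP [cQ|cQ] Hc.
    have := I0.2.2.2.1 c cQ Hc; rewrite E0 => -[Hq Hd]; split=> // d /Hd [c' c'Q Hc'].
    by exists c' => //; rewrite mem_cat c'Q.
  have := I1.2.2.2.1 c cQ Hc; rewrite E1 => -[Hq Hd]; split; first exact: ltnW.
  move=> d /andP [d1 d2]; case: (eqVneq d (md h)) => Ed.
    have [c' c'Q [c'1 Hc']] := I0.2.2.2.2.1 Hl w wu' Hw.
    exists c'; first by rewrite mem_cat c'Q.
    split; first by rewrite c'1 Ed.
    apply: leq_trans _ Hc'; apply: Hmax.
      by have [Hs _] := I1.2.2.1 c cQ.
    apply: allstd_cone.
      by move=> mu Hmu; have [_ /(_ mu Hmu) [_ Hst]] := I1.2.2.1 c cQ.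
    have [_ /(_ c.1 (incone_gen c)) [H _]] := I1.2.2.1 c cQ.
    by have [/incone_mdvd] := R4 iu H.
  have [c' c'Q Hc'] : exists2 c', c' \in Q1 & md c'.1 = d /\ (#|c.2| <= #|c'.2|)%N.
    by apply: Hd; rewrite d2 andbT; move: d1 Ed; lia.
  by exists c' => //; rewrite mem_cat c'Q orbT.
split.
  move=> _ v vu Hv; have [c cQ [c1 Hc]] := I0.2.2.2.2.1 Hl w wu' Hw.
  exists c; first by rewrite mem_cat cQ.
  by split=> //; apply: leq_trans (Hmax v vu Hv) Hc.
exact: (split_deg iu Hh I0 I1).
Qed.

Lemma trunc h u w i : w \subset u -> allstd h w -> i \in u -> i \notin w ->
  (forall v, v \subset u -> allstd h v -> (#|v| <= #|w|)%N) -> (h.1 i < B)%N.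
Proof.
move=> wu Hw iu iw Hmax; rewrite ltnNge; apply/negP => HBi.
suff : allstd h (i |: w).
  move=> Hiw; have := Hmax (i |: w); rewrite subUset sub1set iu wu => /(_ isT Hiw).
  by rewrite cardsU1 iw ltnn.
move=> mu Hmu Hn; have [g [nu [Gg [Hlm Hd]]]] := nstd_G (fun H => H Hn).
move: Hmu => /inconeE [e [H1 H2]].
pose mu' : mon := ([ffun k => if k == i then h.1 i else mu.1 k], mu.2).
apply: (G_nstd Gg Hlm (mu := mu')).
  move: Hd => /mdvdP [e' H]; apply/mdvdP; split=> // k; rewrite /mu' /= ffunE.
  case: eqP => [->|_]; last exact: H.
  by apply: ltnW; apply: leq_trans (HB Gg Hlm.1 i) HBi.
apply: Hw; apply/inconeE; split=> //; split=> k; rewrite /mu' /= ffunE.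
  by case: eqP => [->|_].
case: eqP => [->|/eqP ki] // kw; apply: H2.
by rewrite in_setU1 negb_or ki.
Qed.

Definition meas (h : mon) := ((l - md h) + \sum_(k < n) (B - h.1 k))%N.

Lemma sum_unitv h i :
  (\sum_(k < n) (B - (mmul (unitv i) h).1 k) + (h.1 i < B) <= \sum_(k < n) (B - h.1 k))%N.
Proof.
rewrite (bigD1 i) //= [X in (_ <= X)%N](bigD1 i) //= ffunE unitvE eqxx.
have -> : (\sum_(k < n | k != i) (B - (mmul (unitv i) h).1 k) =
           \sum_(k < n | k != i) (B - h.1 k))%N.
  by apply: eq_bigr => k /negbTE ki; rewrite /= ffunE unitvE ki.
rewrite /= add1n; set S := (\sum_(k < n | k != i) (B - h.1 k))%N; case: ltnP => H /=.
all: lia.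
Qed.

Lemma split_ex : forall h u, exists Q, Inv h u Q.
Proof.
apply: (@lex_ind _ _ (fun u : {set 'I_n} => #|u|) meas) => h u IH.
case: (classic (std h)) => Hh; last by exists [::]; apply: Inv_nstd.
case: (leqP l (md h)) => Hl.
  case: (classic (allstd h u)) => Ha.
    by exists [:: (h, u)]; apply: Inv_single.
  have [w [[wu Hw] Hmax]] := @max_set _ (fun v => v \subset u /\ allstd h v)
    (conj (sub0set u) (allstd0 Hh)).
  have /subsetPn [i iu iw] : ~~ (u \subset w).
    by apply/negP => H; apply: Ha => mu Hmu; apply: Hw; apply: incone_sub H Hmu.
  have HBi := trunc wu Hw iu iw (fun v vu Hv => Hmax v (conj vu Hv)).
  have Hc : (#|u :\ i| < #|u|)%N by have := cardsD1 i u; rewrite iu /=; lia.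
  have [Q0 I0] := IH h (u :\ i) (or_introl Hc).
  have [Q1 I1] : exists Q, Inv (mmul (unitv i) h) u Q.
    apply: IH; right; split=> //.
    have := sum_unitv h i; rewrite HBi /meas md_unitv; lia.
  exists (Q0 ++ Q1); apply: (Inv_splitC (i := i) (w := w)) => //.
  by move=> v vu Hv; apply: Hmax.
case: (set_0Vmem u) => [->|[i iu]].
  by exists [:: (h, set0)]; apply: Inv_single => //; [apply: allstd0 | rewrite eqxx].
have Hc : (#|u :\ i| < #|u|)%N by have := cardsD1 i u; rewrite iu /=; lia.
have [Q0 I0] := IH h (u :\ i) (or_introl Hc).
have [Q1 I1] : exists Q, Inv (mmul (unitv i) h) u Q.
  apply: IH; right; split=> //.
  have := sum_unitv h i; rewrite /meas md_unitv; lia.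
by exists (Q0 ++ Q1); apply: (Inv_splitE (i := i)).
Qed.

End Split.


Section Global.
Variables (K : fieldType) (n m : nat) (deg : 'I_m -> nat) (lt : rel (mon n m))
  (M : vec K n m -> Prop) (G : seq (vec K n m)) (l B : nat).
Hypothesis HGB : is_GB lt M (fun g => List.In g G).
Hypothesis HB : forall g, List.In g G -> forall nu, g nu != 0%R -> forall k, (nu.1 k < B)%N.
Hypothesis Hl : forall j, (deg j <= l)%N.

Local Notation mon := (mon n m).
Local Notation md := (mdeg deg).
Local Notation cone := (mon * {set 'I_n})%type.
Local Notation std := (std lt M).

Definition hj (j : 'I_m) : mon := ([ffun _ => 0%N], j).

Lemma md_hj j : md (hj j) = deg j.
Proof. by rewrite /mdeg big1 // => i _; rewrite ffunE. Qed.

Lemma incone_hj mu : incone (hj mu.2, setT) mu.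
Proof. by apply/inconeE; split=> //; split=> k; rewrite ?ffunE ?in_setT. Qed.

Lemma incone_hj_eq j mu : incone (hj j, setT) mu -> j = mu.2.
Proof. by move=> /inconeE [e _]. Qed.

Lemma global_ex : exists Q : seq cone,
  [/\ forall mu, std mu -> has (fun c => incone c mu) Q,
      forall mu, (count (fun c => incone c mu) Q <= 1)%N,
      forall c, c \in Q -> forall mu, incone c mu -> std mu,
      Qstd deg l Q &
      forall nu, ~ std nu -> (forall k, (0 < nu.1 k)%N -> std (mdec k nu)) ->
        (md nu <= maxn (Qmax deg Q).+1 l)%N].
Proof.
have [f Hf] := fin_all_exists (fun j => split_ex deg l HGB HB (hj j) setT).
pose Q := flatten [seq f j | j <- enum 'I_m].
have memQ : forall j c, c \in f j -> c \in Q.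
  by move=> j c cf; apply/flattenP; exists (f j) => //; apply: map_f; rewrite mem_enum.
have memQ' : forall c, c \in Q -> exists2 j, c \in f j & Inv deg lt M l (hj j) setT (f j).
  move=> c /flattenP [s /mapP [j _ ->] cs]; by exists j.
have El : forall j, maxn l (md (hj j)) = l by move=> j; rewrite md_hj; apply/maxn_idPl.
exists Q; split.
- move=> mu Hmu; have [c cf Hc] := hasP ((Hf mu.2).1 mu (incone_hj mu) Hmu).
  by apply/hasP; exists c => //; apply: memQ cf.
- move=> mu; rewrite count_flatten sumnE.
  rewrite !big_map.
  rewrite (bigD1 mu.2) //= big1 ?addn0; first exact: (Hf mu.2).2.1.
  move=> j ji; apply/eqP; rewrite -leqn0 leqNgt -has_count; apply/negP => /hasP [c cf Hc].
  have [_ /(_ mu Hc) [/incone_hj_eq E _]] := (Hf j).2.2.1 c cf.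
  by move: ji; rewrite E eqxx.
- move=> c /memQ' [j cf Ij] mu Hmu.
  by have [_ /(_ mu Hmu) [_ H]] := Ij.2.2.1 c cf.
- move=> c /memQ' [j cf Ij] Hc; have := Ij.2.2.2.1 c cf Hc; rewrite El => -[Hq Hd].
  split=> // d /Hd [c' c'f Hc']; exists c' => //; exact: memQ c'f.
- move=> nu Hn Hk; have Ij := Hf nu.2.
  have := Ij.2.2.2.2.2 nu (incone_hj nu) Hn; rewrite El.
  have H : forall k, ((hj nu.2).1 k < nu.1 k)%N -> std (mdec k nu).
    by move=> k; rewrite /= ffunE; apply: Hk.
  move=> /(_ H) H2; apply: leq_trans H2 _.
  have : (Qmax deg (f nu.2) <= Qmax deg Q)%N.
    by apply/bigmax_leqP_seq => c cf _; apply: Qmax_ge; apply: memQ cf.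
  lia.
Qed.

End Global.

Import GRing.Theory.


Section Vec.
Variables (K : fieldType) (n m : nat) (deg : 'I_m -> nat) (lt : rel (mon n m))
  (M : vec K n m -> Prop).

Local Notation mon := (mon n m).
Local Notation md := (mdeg deg).
Local Notation cone := (mon * {set 'I_n})%type.
Local Notation std := (std lt M).

Definition indv (mu : mon) : vec K n m := fun nu => if nu == mu then 1%R else 0%R.
Definition coneQ (c : cone) : Defs.cone K n m := Cone (indv c.1) c.2 (md c.1).

Lemma shift_indv g mu nu : shift g (indv mu) nu = indv (mmul g mu) nu.
Proof.
rewrite /shift /indv; case: forallP => H.
  have -> : (([ffun i => nu.1 i - g i]%N, nu.2) == mu) = (nu == mmul g mu); last by [].
  apply/eqP/eqP => [<-|->].
    by apply: mon_eq => //= i; rewrite !ffunE subnKC.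
  by apply: mon_eq => //= i; rewrite !ffunE addKn.
case: eqP => // E; exfalso; apply: H => i; rewrite E /= ffunE leq_addr //.
Qed.

Lemma valid_coneQ c : valid_cone deg (coneQ c).
Proof.
split.
  exists [:: c.1] => nu; rewrite /= /indv.
  by case: (eqVneq nu c.1) => [->|]; rewrite ?inE ?eqxx.
split; first by exists c.1; rewrite /= /indv eqxx oner_eq0.
by move=> nu; rewrite /= /indv; case: (eqVneq nu c.1) => [->|]; rewrite ?eqxx.
Qed.

Lemma cone_elem (c : cone) v : in_cone (coneQ c) v ->
  (forall nu, v nu != 0%R -> incone c nu) /\ finsupp v.
Proof.
move=> [s [Hall Hv]].
have key : forall nu, v nu != 0%R -> exists2 p, p \in s & nu = mmul p.1 c.1.
  move=> nu; rewrite Hv => Hnz.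
  have : has (fun p : expv n * K => nu == mmul p.1 c.1) s.
    apply/negPn/negP => Hn; move: Hnz; rewrite big_seq big1 ?eqxx // => p ps.
    rewrite shift_indv /indv; case: eqP => E; last by rewrite mulr0.
    by exfalso; move/negP: Hn; apply; apply/hasP; exists p => //; apply/eqP.
  by move=> /hasP [p ps /eqP E]; exists p.
split.
  move=> nu /key [p ps ->]; apply: incone_mmul => k Hk.
  by move: (allP Hall p ps) => /= /forallP /(_ k) /implyP; apply.
exists [seq mmul p.1 c.1 | p <- s] => nu /key [p ps ->]; exact: map_f.
Qed.

Lemma sum_uniq_ind (L : seq mon) (F : mon -> K) nu : uniq L ->
  (\sum_(mu <- L) F mu * indv mu nu = if nu \in L then F nu else 0)%R.
Proof.
elim: L => [|x L IH] /=; first by rewrite big_nil.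
move=> /andP [xL uL]; rewrite big_cons IH // inE /indv.
case: (eqVneq nu x) => [->|ne] /=; first by rewrite (negbTE xL) mulr1 addr0.
by rewrite mulr0 add0r.
Qed.

Lemma sum_if_count (Q : seq cone) (p : pred cone) (a : K) :
  (\sum_(c <- Q) (if p c then a else 0) = a *+ count p Q)%R.
Proof.
elim: Q => [|c Q IH]; first by rewrite big_nil.
by rewrite big_cons IH /=; case: (p c); rewrite ?add0r // mulrS.
Qed.

Variables (Q : seq cone).
Hypothesis G1 : forall mu, std mu -> has (fun c => incone c mu) Q.
Hypothesis G2 : forall mu, (count (fun c => incone c mu) Q <= 1)%N.
Hypothesis G3 : forall c, c \in Q -> forall mu, incone c mu -> std mu.

Local Notation tQ := (tnth (in_tuple Q)).
Definition PQ (i : 'I_(size Q)) := coneQ (tQ i).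

Lemma count_two (p : pred cone) (i j : 'I_(size Q)) : (count p Q <= 1)%N ->
  i != j -> p (tQ i) -> p (tQ j) -> False.
Proof.
move=> Hc ij pi pj; move: Hc; rewrite -sum1_count big_tnth (bigD1 i) //= (bigD1 j) /=.
  by rewrite ltnNge ?addnA ?add1n ?ltnS ?leq_addr.
by rewrite pj eq_sym ij.
Qed.

Lemma decompQ : cone_decomp deg PQ (NM lt M).
Proof.
split; first by move=> i; apply: valid_coneQ.
split.
  move=> t; split.
    move=> [[s Hs] Hst].
    pose cs (i : 'I_(size Q)) : vec K n m :=
      fun mu => if incone (tQ i) mu then t mu else 0%R.
    exists cs; split.
      move=> i; pose c := tQ i.
      pose L := undup (filter (incone c) s).
      exists [seq (gam c.1 mu, t mu) | mu <- L]; split.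
        apply/allP => p /mapP [mu muL ->] /=; apply/forallP => k; apply/implyP.
        move: muL; rewrite mem_undup mem_filter => /andP [Hmu _].
        by have [_ H] := inconeP Hmu; apply: H.
      move=> nu; rewrite big_map.
      have -> : (\sum_(j <- L) t j * shift (gam c.1 j) (cgen (coneQ c)) nu =
                 \sum_(j <- L) t j * indv j nu)%R.
        rewrite big_seq_cond [RHS]big_seq_cond; apply: eq_bigr => mu /andP [muL _].
        rewrite /= shift_indv; move: muL; rewrite mem_undup mem_filter => /andP [Hmu _].
        by have [<- _] := inconeP Hmu.
      rewrite sum_uniq_ind ?undup_uniq // /cs mem_undup mem_filter -/c.
      case: (incone c nu) => //=; case: ifP => // ns.
      by apply/eqP; apply: contraFT ns => /Hs.
    move=> nu; rewrite /cs.
    rewrite -(big_tnth _ _ _ xpredT (fun c => if incone c nu then t nu else 0%R)).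
    rewrite sum_if_count.
    case: (eqVneq (t nu) 0%R) => [->|tn]; first by rewrite mul0rn.
    have := G2 nu; have := G1 (Hst nu tn); rewrite has_count.
    by case: (count _ _) => [|[|k]] //= _ _; rewrite mulr1n.
  move=> [cs [Hcs Ht]].
  have [sf Hsf] : exists sf : 'I_(size Q) -> seq mon,
      forall i nu, cs i nu != 0%R -> nu \in sf i.
    apply: (fin_all_exists (P := fun i s => forall nu, cs i nu != 0%R -> nu \in s)).
    by move=> i; have [_ [s Hs]] := cone_elem (Hcs i); exists s.
  have nz : forall nu, t nu != 0%R -> exists i, cs i nu != 0%R.
    move=> nu Hnz; apply/existsP; apply: contraR Hnz => /existsPn H.
    rewrite Ht big1 // => i _; apply/eqP; move: (H i); by rewrite negbK.
  split.
    exists (flatten [seq sf i | i <- enum 'I_(size Q)]) => nu /nz [i Hi].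
    apply/flattenP; exists (sf i); first by apply: map_f; rewrite mem_enum.
    exact: Hsf.
  move=> nu /nz [i Hi]; have [H _] := cone_elem (Hcs i).
  exact: (G3 (mem_tnth i (in_tuple Q)) (H nu Hi)).
move=> cs Hcs Hsum i mu; apply/eqP; apply: contraT => Hnz.
have [H _] := cone_elem (Hcs i); have Hi := H mu Hnz.
have Hj : forall j, j != i -> cs j mu = 0%R.
  move=> j ji; apply/eqP; apply: contraT => Hj.
  have [H' _] := cone_elem (Hcs j).
  by case: (count_two (p := fun c => incone c mu) (G2 mu) ji (H' mu Hj) Hi).
move: (Hsum mu); rewrite (bigD1 i) //= big1 ?addr0 => [E|]; first by move: Hnz; rewrite E eqxx.
exact: Hj.
Qed.

Lemma Pdeg_PQ : Pdeg PQ = Qmax deg Q.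
Proof. by rewrite /Pdeg /Qmax (big_tnth _ _ _ xpredT (fun c : cone => md c.1)). Qed.

Lemma qstd_PQ l : Qstd deg l Q -> q_standard l PQ.
Proof.
move=> H; split.
  move=> i; rewrite card_gt0 => Hi; by have [] := H _ (mem_tnth i (in_tuple Q)) Hi.
move=> i; rewrite card_gt0 => Hi d Hd.
have [_ /(_ d Hd) [c' c'Q [E Hc]]] := H _ (mem_tnth i (in_tuple Q)) Hi.
have [j Ej] := seq_tnthP c'Q.
by exists j; rewrite /PQ /= -Ej.
Qed.

End Vec.


Lemma min_ex (X : Type) (P : X -> Prop) (f : X -> nat) :
  (exists x, P x) -> exists x, P x /\ forall y, P y -> (f x <= f y)%N.
Proof.
move=> [x Px].
suff : forall d x, P x -> (f x <= d)%N -> exists x, P x /\ forall y, P y -> (f x <= f y)%N.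
  by move=> H; apply: (H (f x) x Px).
elim=> [|d IH] {}x {}Px Hd.
  by exists x; split=> // y _; move: Hd; rewrite leqn0 => /eqP ->.
case: (classic (exists y, P y /\ (f y < f x)%N)) => [[y [Py Hy]]|H].
  by apply: (IH y Py); lia.
exists x; split=> // y Py; rewrite leqNgt; apply/negP => Hy; apply: H; by exists y.
Qed.

Lemma In_nth (T : Type) (x0 x : T) s : List.In x s -> exists2 i, (i < size s)%N & nth x0 s i = x.
Proof.
elim: s => [|a s IH] //= [->|/IH [i Hi E]]; first by exists 0%N.
by exists i.+1.
Qed.

Lemma nth_In (T : Type) (x0 : T) s i : (i < size s)%N -> List.In (nth x0 s i) s.
Proof.
elim: s i => [|a s IH] [|i] //= Hi; first by left.
by right; apply: IH.
Qed.

Section GBpart.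
Variables (K : fieldType) (n m : nat) (deg : 'I_m -> nat) (lt : rel (mon n m))
  (M : vec K n m -> Prop).
Hypothesis Hord : is_monomial_order lt.

Local Notation mon := (mon n m).
Local Notation md := (mdeg deg).

Lemma lm_unique (f : vec K n m) a b : is_lm lt f a -> is_lm lt f b -> a = b.
Proof.
move=> [Ha Ha'] [Hb Hb']; apply/eqP; apply: contraT => ab.
have H1 := Hb' a Ha ab; have H2 := Ha' b Hb (ltac:(by rewrite eq_sym)).
by have := Hord.2.1 _ _ _ H1 H2; rewrite Hord.1.
Qed.

Lemma max_in_seq (S : seq mon) : S != [::] ->
  exists2 x, x \in S & forall y, y \in S -> y != x -> lt y x.
Proof.
elim: S => // a S IH _; case: S IH => [|b S'] IH.
  by exists a; rewrite ?inE // => y; rewrite inE => ->.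
have [x xS Hx] := IH isT.
case: (eqVneq a x) => [->|ax].
  exists x; first by rewrite inE eqxx.
  by move=> y; rewrite inE => /orP [/eqP ->|yS]; [rewrite eqxx | apply: Hx].
case/orP: (Hord.2.2.1 a x ax) => H.
  exists x; first by rewrite inE xS orbT.
  by move=> y; rewrite inE => /orP [/eqP -> _|yS]; [exact: H | apply: Hx].
exists a; first by rewrite inE eqxx.
move=> y; rewrite inE => /orP [/eqP ->|yS]; first by rewrite eqxx.
move=> ya; case: (eqVneq y x) => [->|yx] //.
by apply: Hord.2.1 (Hx y yS yx) H.
Qed.

Lemma lm_exists (f : vec K n m) mu0 : finsupp f -> f mu0 != 0%R -> exists mu, is_lm lt f mu.
Proof.
move=> [s Hs] H0.
have : [seq x <- s | f x != 0%R] != [::].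
  apply/eqP => E; have : mu0 \in [seq x <- s | f x != 0%R] by rewrite mem_filter H0 Hs.
  by rewrite E.
move=> /max_in_seq [x]; rewrite mem_filter => /andP [Hx _] H.
exists x; split=> // nu Hnu; apply: H; rewrite mem_filter Hnu; exact: Hs.
Qed.

Lemma not_lt_mul g nu : ~ lt (mmul g nu) nu.
Proof.
move=> H; pose c k := iter k (mmul g) nu.
have chain : forall k, lt (c k.+1) (c k).
  elim=> [|k IH] //; exact: Hord.2.2.2.1 IH.
have : forall x, Acc (fun a b => lt a b) x -> forall k, x <> c k.
  move=> x; elim=> {}x _ IHx k Ex.
  by apply: (IHx (c k.+1)) (erefl _); rewrite Ex; apply: chain.
by move=> /(_ nu (Hord.2.2.2.2 nu) 0%N); apply.
Qed.

End GBpart.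

Lemma B_ex (K : fieldType) (n m : nat) (G : seq (vec K n m)) :
  (forall g, List.In g G -> finsupp g) ->
  exists B, forall g, List.In g G -> forall nu, g nu != 0%R -> forall k, (nu.1 k < B)%N.
Proof.
elim: G => [|g G IH] HG; first by exists 0%N.
have [B HB] := IH (fun g' H => HG g' (or_intror H)).
have [s Hs] := HG g (or_introl erefl).
exists (maxn B (\max_(nu <- s) \max_(k < n) (nu.1 k).+1)) => g' [<-|Hg'] nu Hnu k.
  have := Hs nu Hnu => ns.
  rewrite leq_max; apply/orP; right.
  apply: leq_trans (@leq_bigmax_seq _ s xpredT (fun nu : mon n m => \max_(k < n) (nu.1 k).+1) nu ns isT).
  exact: (@leq_bigmax _ (fun k : 'I_n => (nu.1 k).+1) k).
have := HB g' Hg' nu Hnu k; lia.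
Qed.


Unset Implicit Arguments. Set Strict Implicit.


Theorem theorem4p7 (K : fieldType) (n m : nat) (deg : 'I_m -> nat)
    (lt : rel (mon n m)) (M : vec K n m -> Prop) (G : seq (vec K n m)) :
  is_submodule M -> is_graded deg M -> is_proper_submod M ->
  is_monomial_order lt ->
  (forall g, Stdlib.Lists.List.In g G -> exists d, homog deg g d) ->
  is_GB lt M (fun g => Stdlib.Lists.List.In g G) ->
  let l := (\max_(j < m) deg j)%N in
  exists (k : nat) (Q : 'I_k -> cone K n m),
    cone_decomp deg Q (NM lt M) /\ q_standard l Q /\
    is_GB lt M (fun g => Stdlib.Lists.List.In g G /\ deg_le deg g (maxn (Pdeg Q).+1 l)) /\
    (forall R, is_reduced_GB lt M R ->
       forall g, Stdlib.Lists.List.In g R -> deg_le deg g (maxn (Pdeg Q).+1 l)).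
Proof.
move=> HM Hgr _ Hord Hhom HGB l.
have [B HB] := B_ex (fun g Hg => HM.1 g (HGB.1 g Hg)).
have Hl : forall j, (deg j <= l)%N by move=> j; apply: (@leq_bigmax _ deg j).
have [Q [G1 G2 G3 G4 G5]] := global_ex HGB HB Hl.
exists (size Q), (@PQ K n m deg Q); rewrite Pdeg_PQ.
split; first exact: (decompQ deg G1 G2 G3).
split; first exact: (qstd_PQ K G4).
split.
  split; first by move=> g [Hg _]; apply: HGB.1.
  move=> f mu Mf Hlm.
  have [g0 [nu0 [Gg0 [Hlm0 Hd0]]]] := HGB.2 f mu Mf Hlm.
  have [[g nu] [[/= Gg [Hlmg Hd]] Hmin]] :=
    @min_ex _ (fun p : vec K n m * mon n m =>
                 List.In p.1 G /\ is_lm lt p.1 p.2 /\ mdvd p.2 mu)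
           (fun p => mdeg deg p.2) (ex_intro _ (g0, nu0) (conj Gg0 (conj Hlm0 Hd0))).
  exists g, nu; split; last by split.
  split=> //.
  have Hb : (mdeg deg nu <= maxn (Qmax deg Q).+1 l)%N.
    apply: G5.
      by move=> H; apply: H; exists g, nu; split; [apply: HGB.1 | split=> //; apply: mdvd_refl].
    move=> k Hk [f' [rho [Mf' [Hlm' Hd']]]].
    have [g' [rho' [Gg' [Hlmg' Hd'']]]] := HGB.2 f' rho Mf' Hlm'.
    have Hdv : mdvd rho' (mdec k nu) := mdvd_trans Hd'' Hd'.
    have := Hmin (g', rho') (conj Gg' (conj Hlmg'
              (mdvd_trans Hdv (mdvd_trans (mdec_mdvd k nu) Hd)))).
    have := mdvd_mdeg deg Hdv; have := mdeg_mdec deg Hk; simpl; lia.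
  have [d Hdg] := Hhom g Gg.
  move=> mu' Hmu'; rewrite (Hdg mu' Hmu') -(Hdg nu Hlmg.1); exact: Hb.
move=> R [HRgb [Hred Hmon]] g Hg.
have [nu [Hlm Hg1]] := Hmon g Hg.
have [i Hi Ei] := In_nth (vzero K (n:=n) (m:=m)) Hg.
have Mg : M g := HRgb.1 g Hg.
have red_div : forall rho sigma, ~ std lt M rho -> mdvd rho sigma -> g sigma != 0%R -> mdvd nu rho.
  move=> rho sigma /NNPP [f [rho0 [Mf [Hlm0 Hd0]]]] Hrs Hs.
  have [r' [nu' [Hr' [Hlm' Hd']]]] := HRgb.2 f rho0 Mf Hlm0.
  have [j Hj Ej] := In_nth (vzero K (n:=n) (m:=m)) Hr'.
  case: (eqVneq i j) => [Eij|Nij].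
    have E : nu' = nu by apply: (lm_unique Hord (f := g)) => //; rewrite -Ei Eij Ej.
    by rewrite -E; apply: mdvd_trans Hd' Hd0.
  have Nij' : i <> j by move=> E; move: Nij; rewrite E eqxx.
  have := Hred i j Hi Hj Nij' sigma nu'.
  rewrite Ej Ei => /(_ Hlm' Hs); rewrite (mdvd_trans Hd' (mdvd_trans Hd0 Hrs)) //.
have Hb : (mdeg deg nu <= maxn (Qmax deg Q).+1 l)%N.
  apply: G5.
    by move=> H; apply: H; exists g, nu; split=> //; split=> //; apply: mdvd_refl.
  move=> k Hk Hs.
  have := red_div (mdec k nu) nu (fun H => H Hs) (mdec_mdvd k nu) Hlm.1.
  move=> /(mdvd_mdeg deg); have := mdeg_mdec deg Hk; lia.
have homg : forall mu, g mu != 0%R -> mdeg deg mu = mdeg deg nu.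
  move=> mu Hmu; apply/eqP; apply: contraT => Hne.
  have [Hfs [_ [Hadd [Hsc _]]]] := HM.
  pose hc := homog_comp deg (mdeg deg nu) g.
  pose r2 := fun x => (g x + (-1) * hc x)%R.
  have Mr : M r2 by apply: (Hadd g (fun x => (-1) * hc x)%R Mg); apply: Hsc; apply: Hgr.
  have r2E : forall x, r2 x = if mdeg deg x == mdeg deg nu then 0%R else g x.
    by move=> x; rewrite /r2 /hc /homog_comp; case: eqP => _; rewrite ?mulr0 ?addr0 // mulN1r subrr.
  have [rho Hrho] : exists rho, is_lm lt r2 rho.
    by apply: (lm_exists Hord (mu0 := mu)); [apply: Hfs | rewrite r2E (negbTE Hne)].
  have Hr2 := Hrho.1; rewrite r2E in Hr2.
  move: Hr2; case: ifP => [_|/eqP Hdeg Hgrho]; first by rewrite eqxx.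
  have Hdv : mdvd nu rho.
    apply: (red_div rho rho _ (mdvd_refl rho) Hgrho).
    by move=> H; apply: H; exists r2, rho; split=> //; split=> //; apply: mdvd_refl.
  have Hne2 : rho != nu by apply/eqP => E; apply: Hdeg; rewrite E.
  have := Hlm.2 rho Hgrho Hne2; rewrite (mdvd_mmul Hdv).
  by move=> /(not_lt_mul Hord).
move=> mu Hmu; rewrite homg //.
Qed.
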